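(* Let $L>0$, $N\ge 1$, let $v_\textup{d}>0$ be a constant, and let $K:\mathbb{R}\to\mathbb{R}$ satisfy the following: the support of $K$ is $[0,R]$ with $0<R<L$; $K\in C^2(0,R)$ with $K,K''\in L^\infty(0,R)$; $K(z)>0$ and $K'(z)<0$ for $z\in(0,R)$; $K(0)=K(R)=0$ and $K(0^+):=\lim_{z\to0^+}K(z)>0$. Consider $N$ pedestrians on the periodic domain $[0,L)$ (positions taken modulo $L$) with positions $X^1_t,\dots,X^N_t$ evolving by \[ \dot X^i_t=v_\textup{d}-\sum_{j=1}^N K(X^j_t-X^i_t),\qquad i=1,\dots,N, \] where each difference $X^j_t-X^i_t$ is taken modulo $L$ in $[0,L)$. Let $\bar X^1<\dots<\bar X^N$ (modulo $L$) be an equispaced lattice, i.e. $|\bar X^j-\bar X^i|=(j-i)L/N$, and set $X^i_t=\bar X^i+wt$. Then this translating equispaced lattice is a stable solution of the system (with respect to small perturbations of the positions, in the linearized sense) for \[ w=v_\textup{d}-\sum_{h=1}^{N-1}K\!\left(h\frac{L}{N}\right). \] Moreover, if $R>L/N$, it is also attractive (small perturbations, modulo rigid translations of the whole lattice, decay to zero).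
   Context: The lattice configuration corresponds to the discrete measure $\epsilon_t=\sum_{i=1}^N\delta_{X^i_t}$, which is a translation $\epsilon_t(x)=\bar\epsilon(x-wt)$ of the equispaced configuration. *)

(* Defs.v *)
From HB Require Import structures.
From mathcomp Require Import all_boot all_order all_algebra.
From mathcomp Require Import all_classical all_reals all_analysis.
Set Implicit Arguments. Unset Strict Implicit. Unset Printing Implicit Defensive.
Import Order.TTheory GRing.Theory Num.Theory.
Import numFieldNormedType.Exports.
Local Open Scope ring_scope.
Local Open Scope classical_set_scope.

Definition pmod {R : realType} (L x : R) : R :=
  x - (Num.floor (x / L))%:~R * L.

(* coefficient K'(z) of the linearization, for z = (X^j - X^i) mod L in [0,L).
   For R < z, K vanishes near z so K'(z) = 0 genuinely; the point z = R
   (where K may jump) is given the convention K'(R) := 0. *)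
Definition lin_coef {R : realType} (K : R -> R) (Rk z : R) : R :=
  if z < Rk then derive1 K z else 0.

Definition ped_rhs {R : realType} (N : nat) (L vd : R) (K : R -> R)
  (X : 'I_N -> R) (i : 'I_N) : R :=
  vd - \sum_(j < N) K (pmod L (X j - X i)).

Definition lin_rhs {R : realType} (N : nat) (L : R) (K : R -> R) (Rk : R)
  (Xbar : 'I_N -> R) (x : 'I_N -> R) (i : 'I_N) : R :=
  - \sum_(j < N) lin_coef K Rk (pmod L (Xbar j - Xbar i)) * (x j - x i).

Definition lin_solution {R : realType} (N : nat) (L : R) (K : R -> R) (Rk : R)
  (Xbar : 'I_N -> R) (x : 'I_N -> R -> R) : Prop :=
  forall (i : 'I_N) (t : R),
    is_derive t 1 (x i) (lin_rhs L K Rk Xbar (fun j => x j t) i).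

Definition lin_stable {R : realType} (N : nat) (L : R) (K : R -> R) (Rk : R)
  (Xbar : 'I_N -> R) : Prop :=
  forall eps : R, 0 < eps -> exists2 delta : R, 0 < delta &
    forall x : 'I_N -> R -> R, lin_solution L K Rk Xbar x ->
      (forall i, `|x i 0| < delta) ->
      forall t : R, 0 <= t -> forall i, `|x i t| < eps.

(* attractivity modulo rigid translations: every perturbation converges to a
   rigid translation c (1,...,1) of the lattice *)
Definition lin_attractive {R : realType} (N : nat) (L : R) (K : R -> R) (Rk : R)
  (Xbar : 'I_N -> R) : Prop :=
  forall x : 'I_N -> R -> R, lin_solution L K Rk Xbar x ->
    exists c : R, forall i, x i t @[t --> +oo] --> c.

(* Main.v *)
Require Import Defs.
From HB Require Import structures.
From mathcomp Require Import all_boot all_order all_algebra.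
From mathcomp Require Import all_classical all_reals all_analysis.
Import Order.TTheory GRing.Theory Num.Theory.
Import numFieldNormedType.Exports.
Local Open Scope ring_scope.
Local Open Scope classical_set_scope.
From mathcomp Require Import zify ring lra.

Set Implicit Arguments.
Section H.
Variable R : realType.

Lemma nonincr (f df : R -> R) :
  (forall t : R, is_derive t (1:R) f (df t)) -> (forall t, df t <= 0) ->
  forall s t, s <= t -> f t <= f s.
Proof.
move=> hd hle s t st.
have cf : {within `[s, t], continuous f}.
  apply: derivable_within_continuous => z _.
  by have := hd z => /(@ex_derive _ _ _ _ _ _ _).
have [c _ E] := MVT_segment st (fun z _ => hd z) cf.
rewrite -subr_le0 E; apply: mulr_le0_ge0 => //; by rewrite subr_ge0.
Qed.

Lemma mvt_seg (f df : R -> R) :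
  (forall t : R, is_derive t (1:R) f (df t)) ->
  forall s t, s <= t -> exists2 c, c \in `[s, t]%R & f t - f s = df c * (t - s).
Proof.
move=> hd s t st.
have cf : {within `[s, t], continuous f}.
  apply: derivable_within_continuous => z _.
  by have := hd z => /(@ex_derive _ _ _ _ _ _ _).
exact: MVT_segment st (fun z _ => hd z) cf.
Qed.

Lemma sumsq_le (n : nat) (w : nat -> R) (B : R) : 0 <= B ->
  (forall k, (k < n)%N -> w k ^+ 2 <= B) ->
  (\sum_(k < n) w k) ^+ 2 <= 4 ^+ n * B.
Proof.
move=> B0; elim: n => [|n IH] hw.
  by rewrite big_ord0 expr0n /= mul1r.
rewrite big_ord_recr /=.
have h1 := IH (fun k hk => hw k (ltnW hk)).
have h2 := hw n (ltnSn n).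
set s := \sum_(i < n) w i in h1 *.
have h3 : 1 <= (4:R) ^+ n by apply: exprn_ege1; lra.

have : (s + w n) ^+ 2 <= 2 * s ^+ 2 + 2 * w n ^+ 2.
  have := sqr_ge0 (s - w n); nra.
move=> h4; apply: le_trans h4 _.
have h5 : B <= 4 ^+ n * B.
  by rewrite ler_peMl.
rewrite [4 ^+ _.+1]exprS -mulrA; lra.
Qed.

End H.

Section C.
Context {R : realType}.
Implicit Types (dummy : R).
Variable n : nat.

Definition dd (i j : 'I_n.+1) : nat := if (i <= j)%N then (j - i)%N else (j + n.+1 - i)%N.

Lemma dd_lt i j : (dd i j < n.+1)%N.
Proof. rewrite /dd; have := ltn_ord i; have := ltn_ord j; case: ifP; lia. Qed.

Lemma dd_inj_r i : injective (fun j => Ordinal (dd_lt i j)).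
Proof.
move=> j1 j2 /(congr1 val) /=; rewrite /dd => h; apply/val_inj => /=.
move: h; have := ltn_ord i; have := ltn_ord j1; have := ltn_ord j2.
case: ifP; case: ifP; lia.
Qed.

Lemma dd_inj_l j : injective (fun i => Ordinal (dd_lt i j)).
Proof.
move=> j1 j2 /(congr1 val) /=; rewrite /dd => h; apply/val_inj => /=.
move: h; have := ltn_ord j; have := ltn_ord j1; have := ltn_ord j2.
case: ifP; case: ifP; lia.
Qed.

Lemma sum_dd_r (F : nat -> R) i :
  \sum_(j < n.+1) F (dd i j) = \sum_(h < n.+1) F h.
Proof. by rewrite [RHS](reindex_inj (@dd_inj_r i)). Qed.

Lemma sum_dd_l (F : nat -> R) j :
  \sum_(i < n.+1) F (dd i j) = \sum_(h < n.+1) F h.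
Proof. by rewrite [RHS](reindex_inj (@dd_inj_l j)). Qed.

Lemma dd0 i j : dd i j = 0%N -> i = j.
Proof.
rewrite /dd => h; apply/val_inj => /=; move: h.
have := ltn_ord i; have := ltn_ord j; case: ifP; lia.
Qed.

Lemma dd_succ (e : nat) : (e < n)%N -> dd (inord e) (inord e.+1) = 1%N.
Proof.
move=> he; rewrite /dd !inordK; last 2 first.
- lia.
- lia.
by case: ifP; lia.
Qed.

Lemma dd_succ_ord (i : 'I_n.+1) : (i < n)%N -> dd i (inord i.+1) = 1%N.
Proof.
move=> hi; rewrite /dd inordK; last lia.
by case: ifP; lia.
Qed.

Lemma pmod_lat (L : R) (Xbar : 'I_n.+1 -> R) (hL : 0 < L)
  (hlat : forall i j : 'I_n.+1,
     Xbar j - Xbar i = ((j : int) - (i : int))%:~R * (L / n.+1%:R)) i j :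
  pmod L (Xbar j - Xbar i) = (dd i j)%:R * (L / n.+1%:R).
Proof.
have Ez : forall k : nat, ((k:int)%:~R : R) = k%:R by [].
rewrite hlat /pmod rmorphB /= !Ez /dd.
have hN : 0 < (n.+1%:R : R) by rewrite ltr0n.
have hi := ltn_ord i; have hj := ltn_ord j.
have E : forall a : R, a * (L / n.+1%:R) / L = a / n.+1%:R.
  by move=> a; field; rewrite gt_eqF // gt_eqF.
rewrite E.
case: ifP => hij.
- have -> : Num.floor ((j%:R - i%:R) / (n.+1%:R : R)) = 0.
    apply: floor_def; rewrite add0r /= mulr0z mulr1z.
    rewrite divr_ge0 ?subr_ge0 ?ler_nat //=.
    rewrite ltr_pdivrMr // mul1r ltrBlDr -natrD ltr_nat; lia.
  by rewrite mul0r subr0 natrB.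
- have -> : Num.floor ((j%:R - i%:R) / (n.+1%:R : R)) = -1.
    apply: floor_def; rewrite /= addNr mulr0z.
    rewrite ler_pdivlMr // ltr_pdivrMr // mul0r mulN1r lerBrDl subr_lt0 ltr_nat.
    rewrite lerBlDr -natrD ler_nat; apply/andP; split; lia.
  rewrite natrB; last lia.
  rewrite natrD; field; rewrite gt_eqF //.
Qed.

End C.

Lemma nat_aux1 (e k l n : nat) : (e < l - k)%N -> (k <= l)%N -> (l <= n)%N -> (e + k < n)%N.
Proof. lia. Qed.


Section D.
Variable R : realType.
Variable n : nat.
Variable a : 'I_n.+1 -> 'I_n.+1 -> R.
Variable G : nat -> R.
Hypothesis ha : forall i j, a i j = G (dd i j).

Lemma swap (f : 'I_n.+1 -> R) :
  \sum_i \sum_j a i j * f j = \sum_i \sum_j a i j * f i.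
Proof.
rewrite exchange_big /=.
transitivity (\sum_j (\sum_(h < n.+1) G h) * f j).
  apply: eq_bigr => j _; rewrite -mulr_suml; congr (_ * _).
  by under eq_bigr do rewrite ha; rewrite (sum_dd_l G).
symmetry; apply: eq_bigr => i _; rewrite -mulr_suml; congr (_ * _).
by under eq_bigr do rewrite ha; rewrite (sum_dd_r G).
Qed.

Variable x : 'I_n.+1 -> R -> R.
Hypothesis hx : forall i (t : R), is_derive t (1:R) (x i)
  (\sum_j a i j * (x j t - x i t)).

Lemma V_deriv (m t : R) : is_derive t (1:R) (fun s => \sum_i (x i s - m) ^+ 2)
  (- \sum_i \sum_j a i j * (x j t - x i t) ^+ 2).
Proof.
apply: is_derive_eq.
  have := @is_derive_sum _ _ _ n.+1 (fun i s => (x i s - m) ^+ 2) t 1.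
  rewrite fct_sumE => h; apply: h.
rewrite /= -sumrN.
transitivity (\sum_i \sum_j (a i j * (x j t - m) ^+ 2 - a i j * (x i t - m) ^+ 2
   - a i j * (x j t - x i t) ^+ 2)).
  apply: eq_bigr => i _; rewrite subr0 -scalerDl scaler_sumr.
  apply: eq_bigr => j _. rewrite /GRing.scale /=. ring.
under eq_bigr do rewrite sumrB.
rewrite sumrB sumrN.
under eq_bigr do rewrite sumrB.
by rewrite sumrB (swap (fun j => (x j t - m) ^+ 2)) subrr add0r.
Qed.

Lemma S_deriv (t : R) : is_derive t (1:R) (fun s => \sum_i x i s) 0.
Proof.
apply: is_derive_eq.
  have := @is_derive_sum _ _ _ n.+1 x t 1.
  rewrite fct_sumE => h; apply: h.
rewrite /=.
under eq_bigr do under eq_bigr do rewrite mulrBr.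
under eq_bigr do rewrite sumrB.
rewrite sumrB (swap (fun j => x j t)) /=.
have -> : \sum_i \sum_j a i j * x i t = \sum_i \sum_j a i j * x j t.
  by rewrite swap.
by rewrite subrr.
Qed.

End D.

Theorem mainTheorem1 (R : realType) (L vd Rk : R) (N : nat) (K : R -> R)
  (Xbar : 'I_N -> R)
  (hL : 0 < L) (hN : (1 <= N)%N) (hvd : 0 < vd)
  (hR0 : 0 < Rk) (hRL : Rk < L)
  (hsupp : forall z : R, z < 0 \/ Rk < z -> K z = 0)
  (hC1 : {in `]0, Rk[, forall z, derivable K z 1})
  (hC2 : {in `]0, Rk[, forall z, derivable (derive1 K) z 1})
  (hC2c : {in `]0, Rk[, continuous (derive1n 2 K)})
  (hbnd : exists M : R, forall z, z \in `]0, Rk[ ->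
            `|K z| <= M /\ `|(derive1n 2 K) z| <= M)
  (hpos : {in `]0, Rk[, forall z, 0 < K z})
  (hdec : {in `]0, Rk[, forall z, (derive1 K) z < 0})
  (hK0 : K 0 = 0) (hKR : K Rk = 0)
  (hK0p : exists2 l : R, 0 < l & K z @[z --> 0^'+] --> l)
  (hlat : forall i j : 'I_N,
     Xbar j - Xbar i = ((j : int) - (i : int))%:~R * (L / N%:R)) :
  let w := vd - \sum_(1 <= h < N) K (h%:R * (L / N%:R)) in
  (forall (i : 'I_N) (t : R),
     is_derive t 1 (fun s => Xbar i + w * s)
       (ped_rhs L vd K (fun j => Xbar j + w * t) i))
  /\ lin_stable L K Rk Xbar
  /\ (L / N%:R < Rk -> lin_attractive L K Rk Xbar).
Proof.
case: N hN Xbar hlat => [//|n] _ Xbar hlat w.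
set c := L / n.+1%:R.
have hc0 : 0 < c by rewrite divr_gt0 // ltr0n.
have hpm := pmod_lat _ _ hL hlat.
split.
  move=> i t.
  have E : ped_rhs L vd K (fun j => Xbar j + w * t) i = w.
    rewrite /ped_rhs /w; congr (_ - _).
    transitivity (\sum_(j < n.+1) K ((dd i j)%:R * c)).
      apply: eq_bigr => j _; rewrite -hpm; congr (K (pmod L _)); ring.
    rewrite (sum_dd_r (fun h => K (h%:R * c)) i) -(big_mkord xpredT (fun h => K (h%:R * c))).
    by rewrite big_ltn // mul0r hK0 add0r.
  rewrite E.
  eapply is_derive_eq; first typeclasses eauto.
  by rewrite add0r mul1r; exact: mulr1.
pose G (h : nat) := if h == 0%N then 0 else - lin_coef K Rk (h%:R * c).
pose a (i j : 'I_n.+1) := G (dd i j).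
have hG : forall h : nat, 0 <= G h.
  move=> h; rewrite /G; case: eqP => // /eqP hh.
  rewrite /lin_coef; case: ifP => hz; last by rewrite oppr0.
  rewrite oppr_ge0 ltW //; apply: hdec; rewrite inE /= in_itv /= hz andbT mulr_gt0 // ltr0n lt0n; exact: hh.
have ha0 : forall i j, 0 <= a i j by move=> i j; exact: hG.
have hrhs : forall (y : 'I_n.+1 -> R) i,
    lin_rhs L K Rk Xbar y i = \sum_j a i j * (y j - y i).
  move=> y i; rewrite /lin_rhs -sumrN; apply: eq_bigr => j _.
  rewrite /a /G hpm; case: eqP => [/dd0 ->|_]; first by rewrite !subrr !mulr0 oppr0.
  by rewrite mulNr.
have hsol : forall y, lin_solution L K Rk Xbar y ->
    forall i (t : R), is_derive t (1:R) (y i) (\sum_j a i j * (y j t - y i t)).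
  by move=> y hy i t; rewrite -hrhs; exact: hy.
have hQ : forall (y : 'I_n.+1 -> R -> R) t,
    0 <= \sum_i \sum_j a i j * (y j t - y i t) ^+ 2.
  by move=> y t; apply: sumr_ge0 => i _; apply: sumr_ge0 => j _; rewrite mulr_ge0 // sqr_ge0.
have le_term : forall (f : 'I_n.+1 -> R) i, (forall j, 0 <= f j) -> f i <= \sum_j f j.
  move=> f i hf; rewrite (bigD1 i) //= lerDl; exact: sumr_ge0.
split.
  move=> eps he; exists (eps / n.+2%:R); first by rewrite divr_gt0 // ltr0n.
  move=> y hy h0 t ht i.
  have ha : forall i j, a i j = G (dd i j) by [].
  have Vd := V_deriv _ _ ha _ (hsol y hy) 0.
  have Vle := @nonincr _ _ _ Vd (fun t => ltac:(rewrite oppr_le0; exact: hQ)) _ _ ht.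
  rewrite /= in Vle.
  have h1 : (y i t - 0) ^+ 2 <= \sum_i (y i t - 0) ^+ 2.
    by apply: (le_term (fun i => (y i t - 0) ^+ 2)) => j; exact: sqr_ge0.
  have h2 : \sum_i (y i 0 - 0) ^+ 2 <= \sum_(i < n.+1) (eps / n.+2%:R) ^+ 2.
    apply: ler_sum => j _; rewrite subr0 -real_normK ?num_real //.
    have := h0 j; have := normr_ge0 (y j 0); set u := `|y j 0|; set d := eps / _ => p1 p2; nra.
  rewrite sumr_const card_ord in h2.
  set d := eps / n.+2%:R in h2.
  have hd : d * n.+2%:R = eps by rewrite /d divfK // pnatr_eq0.
  have hd0 : 0 < d by rewrite /d divr_gt0 // ltr0n.
  have h3 : (y i t - 0) ^+ 2 < eps ^+ 2.
    rewrite -hd -mulr_natr in h2 *.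
    have e2 : (n.+2%:R : R) = n.+1%:R + 1 by rewrite -natr1.
    have e1 : (1 : R) <= n.+1%:R by rewrite ler1n.
    rewrite e2 in hd *; nra.
  rewrite subr0 -real_normK ?num_real // in h3.
  have := normr_ge0 (y i t) => p1; nra.
move=> hcR y hy.
have hx := hsol y hy.
have ha : forall i j, a i j = G (dd i j) by [].
have hn : (0 < n)%N.
  rewrite lt0n; apply/negP => /eqP n0; move: hcR; rewrite /c n0 divr1; lra.
have Sd := S_deriv _ _ ha _ hx.
have hS : forall t, \sum_i y i t = \sum_i y i 0.
  have key : forall s t, s <= t -> \sum_i y i t = \sum_i y i s.
    move=> s t st; apply/eqP; rewrite eq_le; apply/andP; split.
      exact: (@nonincr _ _ _ Sd (fun _ => lexx 0) _ _ st).
    have := @nonincr _ _ (fun _ => - 0) (fun t => is_deriveN (Sd t))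
      (fun _ => ltac:(by rewrite oppr0)) _ _ st.
    by rewrite /= lerN2.
  move=> t; case: (leP 0 t) => ht; first exact: key.
  by rewrite (key t 0 (ltW ht)).
pose m := (\sum_i y i 0) / n.+1%:R.
have hm : \sum_i y i 0 = n.+1%:R * m by rewrite /m mulrC divfK // pnatr_eq0.
exists m => i.
pose V s := \sum_i (y i s - m) ^+ 2.
pose Q s := \sum_i \sum_j a i j * (y j s - y i s) ^+ 2.
have Vd : forall t, is_derive t (1:R) V (- Q t) := V_deriv _ _ ha _ hx m.
pose al := - derive1 K c.
have hal : 0 < al.
  by rewrite /al oppr_gt0; apply: hdec; rewrite inE /= in_itv /= hc0 hcR.
have le_term' : forall m (f : 'I_m -> R) i, (forall j, 0 <= f j) -> f i <= \sum_j f j.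
  move=> m' f i' hf; rewrite (bigD1 i') //= lerDl; exact: sumr_ge0.
pose C : R := 4 ^+ n.+1 * 4 ^+ n.
have hC : 1 <= C by rewrite /C; apply: mulr_ege1; apply: exprn_ege1; lra.
pose lam := al / (n.+1%:R * C).
have hlam : 0 < lam by rewrite /lam divr_gt0 // mulr_gt0 // ?ltr0n; lra.
have key : forall s, lam * V s <= Q s.
  move=> s.
  pose z k := y (inord k) s.
  pose D := \sum_(e < n) (z e.+1 - z e) ^+ 2.
  have hD : 0 <= D by apply: sumr_ge0 => e _; exact: sqr_ge0.
  have hQa : al * D <= Q s.
    have : \sum_(i < n.+1) (if (i < n)%N then al * (z i.+1 - z i) ^+ 2 else 0) <= Q s.
      apply: ler_sum => i0 _; case: ifP => hi; last first.
        by apply: sumr_ge0 => j _; rewrite mulr_ge0 // sqr_ge0.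
      apply: le_trans (le_term (fun j => a i0 j * (y j s - y i0 s) ^+ 2) (inord i0.+1) _);
        last by move=> j; rewrite mulr_ge0 // sqr_ge0.
      have e1 := @dd_succ_ord _ i0 hi.
      by rewrite /= /a e1 /G /= /lin_coef mul1r hcR /z inord_val.
    move=> h; apply: le_trans h.
    rewrite big_ord_recr /= ltnn addr0.
    under eq_bigr => i0 _ do rewrite ltn_ord.
    by rewrite -mulr_sumr.
  have hz : forall k l, (k <= n)%N -> (l <= n)%N -> (z l - z k) ^+ 2 <= 4 ^+ n * D.
    have wl : forall k l, (k <= l)%N -> (l <= n)%N -> (z l - z k) ^+ 2 <= 4 ^+ n * D.
      move=> k l hkl hl.
      have -> : z l - z k = \sum_(e < l - k) (z (e + k)%N.+1 - z (e + k)%N).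
        by rewrite -(telescope_sumr z hkl) -{1}(add0n k) big_addn big_mkord.
      apply: le_trans (@sumsq_le _ (l - k) (fun e => z (e + k)%N.+1 - z (e + k)%N) D hD _) _.
        move=> e he.
        have hek : (e + k < n)%N := @nat_aux1 _ _ _ _ he hkl hl.
        exact: (le_term' n (fun e => (z e.+1 - z e) ^+ 2) (Ordinal hek) (fun _ => sqr_ge0 _)).
      apply: ler_wpM2r => //; apply: ler_weXn2l; [lra | exact: leq_trans (leq_subr k l) hl].
    move=> k l hk hl; case: (leqP k l) => hkl; first exact: wl.
    by rewrite -sqrrN opprB; apply: wl => //; exact: ltnW.
  have hc : forall i1 : 'I_n.+1, (y i1 s - m) ^+ 2 <= C * D.
    move=> i1.
    have e : n.+1%:R * (y i1 s - m) = \sum_(k < n.+1) (z i1 - z k).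
      rewrite sumrB sumr_const card_ord /z inord_val.
      under [X in _ = _ - X]eq_bigr do rewrite inord_val.
      rewrite (hS s) hm -mulr_natl; ring.
    have := @sumsq_le _ n.+1 (fun k => z i1 - z k) _ (mulr_ge0 (exprn_ge0 _ (ler0n _ 4)) hD).
    rewrite -e /C => h.
    have h' : (n.+1%:R * (y i1 s - m)) ^+ 2 <= 4 ^+ n.+1 * (4 ^+ n * D).
      apply: h => k hk; rewrite -sqrrN opprB; apply: hz; rewrite -ltnS //; exact: ltn_ord.
    rewrite -mulrA; apply: le_trans h'.
    have e1 : (1 : R) <= n.+1%:R by rewrite ler1n.
    rewrite exprMn ler_peMl ?sqr_ge0 //; exact: exprn_ege1.
  have hV : V s <= n.+1%:R * (C * D).
    apply: le_trans (ler_sum _ (fun j _ => hc j)) _.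
    by rewrite sumr_const card_ord mulr_natl.
  apply: le_trans hQa.
  have -> : al * D = lam * (n.+1%:R * (C * D)).
    rewrite /lam; field; apply/andP; split; rewrite ?pnatr_eq0 //; lra.
  by apply: ler_wpM2l => //; exact: ltW.
have decay : forall t, 0 <= t -> V t * (1 + lam * t) <= V 0.
  move=> t ht.
  have [xi hxi E] := @mvt_seg _ _ _ Vd _ _ ht.
  move: hxi; rewrite in_itv /= => /andP[hx0 hxt].
  have h1 := key xi.
  have h2 := @nonincr _ _ _ Vd (fun t => ltac:(rewrite oppr_le0; exact: hQ)) _ _ hxt.
  rewrite subr0 in E.
  have h3 : 0 <= V t by apply: sumr_ge0 => j _; exact: sqr_ge0.
  move: E h1 h2 h3; set A := V t; set B := V 0; set P := Q xi; set W := V xi.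
  move=> E h1 h2 h3.
  have : lam * W * t <= P * t by apply: ler_wpM2r.
  have : lam * A * t <= lam * W * t.
    by apply: ler_wpM2r => //; apply: ler_wpM2l => //; exact: ltW.
  nra.
apply/cvgrPdist_lt => e he.
have V0 : 0 <= V 0 by apply: sumr_ge0 => j _; exact: sqr_ge0.
exists (V 0 / (lam * e ^+ 2)); split; first exact: num_real.
move=> t hMt.
have he2 : 0 < lam * e ^+ 2 by rewrite mulr_gt0 // exprn_gt0.
have ht : 0 <= t by apply: le_trans (ltW hMt); rewrite divr_ge0 // ltW.
have h1 := decay t ht.
have h2 : V 0 < t * (lam * e ^+ 2) by rewrite -ltr_pdivrMr.
have h3 : (y i t - m) ^+ 2 <= V t.
  by apply: (le_term (fun j => (y j t - m) ^+ 2) i) => j; exact: sqr_ge0.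
have h4 : (y i t - m) ^+ 2 < e ^+ 2.
  move: h1 h2 h3; set A := V t; set B := V 0; set u := (_ - m) ^+ 2.
  set p := lam * t; set q := e ^+ 2.
  have hp : 0 <= p by rewrite /p mulr_ge0 // ltW.
  have hq : 0 < q by rewrite /q exprn_gt0.
  rewrite mulrA (mulrC t) -/p => h1 h2 h3.
  nra.
rewrite distrC; rewrite -real_normK ?num_real // in h4.
have := normr_ge0 (y i t - m) => p1; nra.
Qed.
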